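(* Let $b\ge2$ be an integer and let $\gamma_0,\dots,\gamma_{b-1}$ be positive numbers, at least one greater than $1$ and at least one less than $1$. Let $X$ be the set of $x\in[0,1]$ such that $\sum_{n=1}^\infty\gamma_{x(1)}\gamma_{x(2)}\cdots\gamma_{x(n)}<+\infty$. Then the Hausdorff dimension (with respect to the Euclidean metric) of $X$ is $$\dim X=\min_{s\ge0}\frac{\log\left(\sum_{i=0}^{b-1}\gamma_i^{-s}\right)}{\log b}.$$
   Context: For $x\in[0,1]$, $x(j)$ is the $j$th digit of the $b$-ary expansion of $x$, where expansions with infinitely recurring digit $b-1$ are forbidden so that the expansion is unique. *)

(* Defs.v *)
From Stdlib Require Import Reals Lra Lia ZArith.
Open Scope R_scope.

(* j-th digit (j >= 1) of the b-ary expansion of x in [0,1], with recurring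
   digit b-1 forbidden: x(j) = floor(b^j x) mod b. (For x = 1 all digits are 0.) *)
Definition digit (b : nat) (x : R) (j : nat) : nat :=
  Z.to_nat (Z.modulo (Int_part (x * INR b ^ j)) (Z.of_nat b)).

Fixpoint gprod (b : nat) (g : nat -> R) (x : R) (n : nat) : R :=
  match n with
  | O => 1
  | S m => gprod b g x m * g (digit b x (S m))
  end.

Definition Xset (b : nat) (g : nat -> R) (x : R) : Prop :=
  0 <= x <= 1 /\
  exists l, Un_cv (fun N => sum_f_R0 (fun n => gprod b g x (S n)) N) l.

Definition dists (A : R -> Prop) (r : R) : Prop :=
  exists x y, A x /\ A y /\ r = Rabs (x - y).

Definition diam_le (A : R -> Prop) (delta : R) : Prop :=
  forall x y, A x -> A y -> Rabs (x - y) <= delta.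

(* set_cost s A c : c = (diam A)^s, with the conventions diam(empty)^s = 0
   and 0^0 = 1 for nonempty sets of diameter 0. *)
Definition set_cost (s : R) (A : R -> Prop) (c : R) : Prop :=
  ((~ exists x, A x) /\ c = 0) \/
  ((exists x, A x) /\ exists d, is_lub (dists A) d /\
     ((d = 0 /\ s = 0 /\ c = 1) \/ (d = 0 /\ s <> 0 /\ c = 0) \/
      (0 < d /\ c = Rpower d s))).

(* H^s(E) = 0 : for every delta > 0, H^s_delta(E) = 0, i.e. for every eps > 0
   there is a countable delta-cover (U n) of E with sum diam(U n)^s <= eps. *)
Definition Hnull (s : R) (E : R -> Prop) : Prop :=
  forall delta eps, 0 < delta -> 0 < eps ->
  exists (U : nat -> R -> Prop) (c : nat -> R),
    (forall x, E x -> exists n, U n x) /\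
    (forall n, diam_le (U n) delta /\ set_cost s (U n) (c n)) /\
    (forall N, sum_f_R0 c N <= eps).

Definition is_glb (P : R -> Prop) (m : R) : Prop :=
  (forall s, P s -> m <= s) /\ (forall m', (forall s, P s -> m' <= s) -> m' <= m).

Definition hausdorff_dim (E : R -> Prop) (d : R) : Prop :=
  is_glb (fun s => 0 <= s /\ Hnull s E) d.

Definition dimfun (b : nat) (g : nat -> R) (s : R) : R :=
  ln (sum_f_R0 (fun i => Rpower (g i) (- s)) (b - 1)) / ln (INR b).

(* Main.v *)
Require Import Defs.
From Stdlib Require Import Reals Lra Lia ZArith List ClassicalEpsilon.
Open Scope R_scope.
Import ListNotations.


Fixpoint rsum (f : nat -> R) (n : nat) : R :=
  match n with O => 0 | S p => rsum f p + f p end.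

Lemma rsum_sum_f_R0 f N : sum_f_R0 f N = rsum f (S N).
Proof. induction N; simpl; [lra|]. simpl in IHN. rewrite IHN. lra. Qed.

Lemma rsum_ext f h n : (forall k, (k < n)%nat -> f k = h k) -> rsum f n = rsum h n.
Proof. induction n; intros H; simpl; [lra|]. rewrite IHn by (intros; apply H; lia). rewrite H by lia. lra. Qed.

Lemma rsum_le f h n : (forall k, (k < n)%nat -> f k <= h k) -> rsum f n <= rsum h n.
Proof. induction n; intros H; simpl; [lra|]. specialize (IHn ltac:(intros; apply H; lia)). specialize (H n ltac:(lia)). lra. Qed.

Lemma rsum_nonneg f n : (forall k, (k < n)%nat -> 0 <= f k) -> 0 <= rsum f n.
Proof. intros H. apply Rle_trans with (rsum (fun _ => 0) n). clear H; induction n; simpl; lra. now apply rsum_le. Qed.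

Lemma rsum_plus f h n : rsum (fun k => f k + h k) n = rsum f n + rsum h n.
Proof. induction n; simpl; lra. Qed.

Lemma rsum_scal c f n : rsum (fun k => c * f k) n = c * rsum f n.
Proof. induction n; simpl; [lra|]. rewrite IHn. lra. Qed.

Lemma rsum_add f n p : rsum f (n + p) = rsum f n + rsum (fun r => f (n + r)%nat) p.
Proof. induction p; simpl. rewrite Nat.add_0_r; lra. rewrite Nat.add_succ_r. simpl. rewrite IHp. lra. Qed.

Lemma rsum_mul f a c : rsum f (a * c) = rsum (fun q => rsum (fun r => f (q * c + r)%nat) c) a.
Proof. induction a; simpl; [lra|]. replace (c + a * c)%nat with (a * c + c)%nat by lia.
  rewrite rsum_add, IHa. reflexivity. Qed.

Lemma rsum_mono f n p : (forall k, 0 <= f k) -> (n <= p)%nat -> rsum f n <= rsum f p.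
Proof. intros H Hl. replace p with (n + (p - n))%nat by lia. rewrite rsum_add.
  pose proof (rsum_nonneg (fun r => f (n + r)%nat) (p - n) ltac:(intros; apply H)). lra. Qed.

Lemma rsum_ge_term f n k : (forall j, (j < n)%nat -> 0 <= f j) -> (k < n)%nat -> f k <= rsum f n.
Proof. induction n; intros H Hk; [lia|]. simpl. destruct (Nat.eq_dec k n).
  subst. pose proof (rsum_nonneg f n ltac:(intros; apply H; lia)). lra.
  pose proof (IHn ltac:(intros; apply H; lia) ltac:(lia)). pose proof (H n ltac:(lia)). lra. Qed.

Fixpoint Qw (b : nat) (g : nat -> R) (n k : nat) : R :=
  match n with O => 1 | S p => Qw b g p (k / b) * g (k mod b) end.

Lemma Qw_pos b g n k : (1 < b)%nat -> (forall i, (i < b)%nat -> 0 < g i) -> 0 < Qw b g n k.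
Proof. intros Hb Hg; revert k; induction n; intros k; simpl; [lra|].
  apply Rmult_lt_0_compat; auto. apply Hg. apply Nat.mod_upper_bound; lia. Qed.

Lemma Qw_split b g a c N : (1 < b)%nat ->
  Qw b g (c + a) N = Qw b g a (N / b ^ c) * Qw b g c (N mod b ^ c).
Proof. intros Hb. revert N; induction c; intros N.
  - rewrite Nat.pow_0_r, Nat.div_1_r, Nat.add_0_l. change (Qw b g 0 _) with 1. lra.
  - change (S c + a)%nat with (S (c + a)). change (b ^ S c)%nat with (b * b ^ c)%nat.
    cbn [Qw]. rewrite IHc. rewrite Nat.Div0.div_div. 
    assert (E1: ((N mod (b * b ^ c)) / b = (N / b) mod b ^ c)%nat).
    { rewrite Nat.Div0.mod_mul_r. rewrite Nat.mul_comm.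
      rewrite Nat.div_add by lia. rewrite Nat.div_small by (apply Nat.mod_upper_bound; lia). lia. }
    assert (E2: ((N mod (b * b ^ c)) mod b = N mod b)%nat).
    { rewrite Nat.Div0.mod_mul_r. rewrite Nat.mul_comm. rewrite Nat.Div0.mod_add.
      apply Nat.Div0.mod_mod. }
    rewrite E1, E2. lra.
Qed.

Lemma Qw_prod b g (phi : R -> R) n : (1 < b)%nat -> (forall i, (i < b)%nat -> 0 < g i) ->
  (forall x y, 0 < x -> 0 < y -> phi (x * y) = phi x * phi y) -> phi 1 = 1 ->
  rsum (fun k => phi (Qw b g n k)) (b ^ n) = (rsum (fun i => phi (g i)) b) ^ n.
Proof.
  intros Hb Hg Hm H1. induction n.
  - simpl. lra.
  - rewrite Nat.pow_succ_r', (Nat.mul_comm b), (rsum_mul _ (b ^ n) b). simpl pow. rewrite <- IHn.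
    rewrite <- rsum_scal. apply rsum_ext. intros q Hq.
    rewrite Rmult_comm, <- rsum_scal. apply rsum_ext. intros r Hr.
    cbn [Qw]. replace ((q * b + r) / b)%nat with q.
    2:{ rewrite Nat.add_comm, Nat.div_add by lia. rewrite Nat.div_small by lia. lia. }
    replace ((q * b + r) mod b)%nat with r.
    2:{ rewrite Nat.add_comm, Nat.Div0.mod_add. rewrite Nat.mod_small by lia. lia. }
    rewrite Hm; [lra| apply Qw_pos; auto | auto].
Qed.

Lemma Int_part_unique r z : IZR z <= r -> r < IZR z + 1 -> Int_part r = z.
Proof. intros H1 H2. unfold Int_part. rewrite <- (tech_up r (z + 1)). lia.
  rewrite plus_IZR; simpl; lra. rewrite plus_IZR; simpl; lra. Qed.

Lemma Int_part_nonneg r : 0 <= r -> (0 <= Int_part r)%Z.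
Proof. intros H. destruct (base_Int_part r) as [H1 H2].
  destruct (Z_lt_le_dec (Int_part r) 0); [|auto]. exfalso.
  assert (Int_part r <= -1)%Z by lia. apply IZR_le in H0. lra. Qed.

Lemma Int_part_div y (b : nat) : 0 <= y -> (0 < b)%nat ->
  (Int_part (y * INR b) / Z.of_nat b = Int_part y)%Z.
Proof.
  intros Hy Hb. set (z := Int_part (y * INR b)). destruct (base_Int_part (y * INR b)) as [H1 H2].
  fold z in H1, H2. symmetry. apply Int_part_unique.
  - assert (Hq: (z / Z.of_nat b * Z.of_nat b <= z)%Z).
    { pose proof (Z.mul_div_le z (Z.of_nat b)). lia. }
    apply IZR_le in Hq. rewrite mult_IZR, <- INR_IZR_INZ in Hq.
    assert (0 < INR b) by (apply lt_0_INR; lia). nra.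
  - assert (Hq: (z + 1 <= (z / Z.of_nat b + 1) * Z.of_nat b)%Z).
    { pose proof (Z.mod_pos_bound z (Z.of_nat b) ltac:(lia)). pose proof (Z.div_mod z (Z.of_nat b) ltac:(lia)). lia. }
    apply IZR_le in Hq. rewrite mult_IZR, plus_IZR, plus_IZR, <- INR_IZR_INZ in Hq.
    assert (0 < INR b) by (apply lt_0_INR; lia). simpl in Hq. nra.
Qed.

Definition Nfl (b : nat) (x : R) (n : nat) : nat := Z.to_nat (Int_part (x * INR b ^ n)).

Lemma Nfl_S b x n : 0 <= x -> (0 < b)%nat -> (Nfl b x (S n) / b = Nfl b x n)%nat.
Proof. intros Hx Hb. unfold Nfl. rewrite <- (Int_part_div (x * INR b ^ n) b).
  2:{ apply Rmult_le_pos; auto. apply pow_le, pos_INR. } 2: lia.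
  rewrite Z2Nat.inj_div. rewrite Nat2Z.id. f_equal. f_equal. f_equal. simpl. ring.
  apply Int_part_nonneg. apply Rmult_le_pos; [apply Rmult_le_pos; auto|]. apply pow_le, pos_INR. apply pos_INR. lia. Qed.

Lemma digit_Nfl b x n : 0 <= x -> (0 < b)%nat -> digit b x n = (Nfl b x n mod b)%nat.
Proof. intros Hx Hb. unfold digit, Nfl. rewrite Z2Nat.inj_mod. rewrite Nat2Z.id. reflexivity.
  apply Int_part_nonneg. apply Rmult_le_pos; auto. apply pow_le, pos_INR. lia. Qed.

Lemma gprod_Qw b g x n : 0 <= x -> (1 < b)%nat -> gprod b g x n = Qw b g n (Nfl b x n).
Proof. intros Hx Hb. induction n. reflexivity.
  simpl gprod. cbn [Qw]. rewrite Nfl_S by (auto; lia). rewrite IHn, digit_Nfl by (auto; lia). reflexivity. Qed.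

Lemma Nfl_bounds b x n : 0 <= x -> INR (Nfl b x n) <= x * INR b ^ n < INR (Nfl b x n) + 1.
Proof. intros Hx. unfold Nfl. rewrite INR_IZR_INZ. rewrite Z2Nat.id.
  destruct (base_Int_part (x * INR b ^ n)). lra.
  apply Int_part_nonneg. apply Rmult_le_pos; auto. apply pow_le, pos_INR. Qed.

Lemma Nfl_unique b x n (K : nat) : 0 <= x -> INR K <= x * INR b ^ n < INR K + 1 -> Nfl b x n = K.
Proof. intros Hx [H1 H2]. unfold Nfl. rewrite (Int_part_unique _ (Z.of_nat K)). apply Nat2Z.id.
  rewrite <- INR_IZR_INZ; lra. rewrite <- INR_IZR_INZ; lra. Qed.

Definition Zs (b : nat) (g : nat -> R) (s : R) : R := rsum (fun i => exp (- s * ln (g i))) b.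
Definition Fs b g s := ln (Zs b g s).

Lemma Zs_pos b g s : (0 < b)%nat -> 0 < Zs b g s.
Proof. intros Hb. unfold Zs. destruct b; [lia|]. simpl.
  pose proof (rsum_nonneg (fun i => exp (- s * ln (g i))) b ltac:(intros; left; apply exp_pos)).
  pose proof (exp_pos (- s * ln (g b))). lra. Qed.

Lemma ln_le' x y : 0 < x -> x <= y -> ln x <= ln y.
Proof. intros H1 [H2|H2]. left; apply ln_increasing; auto. subst; lra. Qed.
Lemma exp_le' x y : x <= y -> exp x <= exp y.
Proof. intros [H|H]. left; apply exp_increasing; auto. subst; lra. Qed.
Lemma exp_le_inv x y : exp x <= exp y -> x <= y.
Proof. intros H. destruct (Rle_dec x y); auto. assert (exp y < exp x) by (apply exp_increasing; lra). lra. Qed.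

Lemma dpl_ext f h x l : (forall y, f y = h y) -> derivable_pt_lim f x l -> derivable_pt_lim h x l.
Proof. intros E H eps He. destruct (H eps He) as [d Hd]. exists d. intros hh H1 H2.
  rewrite <- !E. auto. Qed.

Lemma Zs_deriv b g s : derivable_pt_lim (Zs b g) s (rsum (fun i => - ln (g i) * exp (- s * ln (g i))) b).
Proof. unfold Zs. induction b.
  - simpl. apply (derivable_pt_lim_const 0).
  - simpl. apply (derivable_pt_lim_plus (fun s => rsum (fun i => exp (- s * ln (g i))) b) (fun s => exp (- s * ln (g b)))).
    apply IHb. rewrite Rmult_comm.
    apply (derivable_pt_lim_comp (fun s => - s * ln (g b)) exp).
    + replace (- ln (g b)) with (- ln (g b) * 1) by ring.
      eapply dpl_ext. 2: apply (derivable_pt_lim_scal id (- ln (g b)) s 1).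
      intros y; unfold mult_real_fct, id; ring. apply derivable_pt_lim_id.
    + apply derivable_pt_lim_exp.
Qed.

Lemma Fs_deriv b g s : (0 < b)%nat -> exists l, derivable_pt_lim (Fs b g) s l.
Proof. intros Hb. eexists. unfold Fs. eapply dpl_ext.
  2: apply (derivable_pt_lim_comp (Zs b g) ln). intros; reflexivity.
  apply Zs_deriv. apply derivable_pt_lim_ln. apply Zs_pos; auto. Qed.

Lemma Fs_cont b g s : (0 < b)%nat -> continuity_pt (Fs b g) s.
Proof. intros Hb. destruct (Fs_deriv b g s Hb) as [l Hl].
  apply derivable_continuous_pt. exists l. exact Hl. Qed.

Lemma Zs_ge_term b g s j : (j < b)%nat -> exp (- s * ln (g j)) <= Zs b g s.
Proof. intros Hj. unfold Zs. apply (rsum_ge_term (fun i => exp (- s * ln (g i)))); auto.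
  intros; left; apply exp_pos. Qed.

Lemma Fs_ge_term b g s j : (j < b)%nat -> - s * ln (g j) <= Fs b g s.
Proof. intros Hj. unfold Fs. rewrite <- (ln_exp (- s * ln (g j))). apply ln_le'. apply exp_pos.
  now apply Zs_ge_term. Qed.

Lemma cont_pos_nbhd f c m : continuity_pt f c -> m < f c ->
  exists d, 0 < d /\ forall y, Rabs (y - c) < d -> m < f y.
Proof. intros Hc Hm. destruct (Hc (f c - m) ltac:(lra)) as [d [Hd H]]. exists d. split; [lra|].
  intros y Hy. destruct (Req_dec y c). subst; lra.
  assert (Hh := H y). simpl in Hh. unfold R_dist in Hh. specialize (Hh (conj (conj I (not_eq_sym H0)) Hy)).
  apply Rabs_def2 in Hh. lra. Qed.

Lemma exists_min b g : (0 < b)%nat -> (exists j, (j < b)%nat /\ 0 < g j < 1) ->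
  exists s0, 0 <= s0 /\ (forall s, 0 <= s -> Fs b g s0 <= Fs b g s) /\ (forall s, s0 < s -> Fs b g s0 < Fs b g s).
Proof.
  intros Hb [j [Hj Hgj]]. set (a := - ln (g j)).
  assert (Ha : 0 < a). { unfold a. assert (ln (g j) < ln 1) by (apply ln_increasing; lra). rewrite ln_1 in H. lra. }
  assert (Hco : forall s, a * s <= Fs b g s). { intros s. pose proof (Fs_ge_term b g s j Hj). unfold a. lra. }
  set (F0 := Fs b g 0). set (S := Rabs F0 / a + 1).
  assert (HS : 0 <= S). { unfold S. pose proof (Rabs_pos F0). assert (0 <= Rabs F0 / a) by (apply Rmult_le_pos; [lra| left; apply Rinv_0_lt_compat; lra]). lra. }
  assert (Hbig : forall s, S < s -> F0 < Fs b g s).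
  { intros s Hs. pose proof (Hco s). assert (Rabs F0 + a <= a * s).
    { unfold S in Hs. apply Rmult_lt_compat_l with (r := a) in Hs; auto.
      replace (a * (Rabs F0 / a + 1)) with (Rabs F0 + a) in Hs by (field; lra). lra. }
    pose proof (Rle_abs F0). lra. }
  destruct (continuity_ab_min (Fs b g) 0 S HS (fun c _ => Fs_cont b g c Hb)) as [mx [Hmx Hmxr]].
  set (mm := Fs b g mx).
  assert (Hglob : forall s, 0 <= s -> mm <= Fs b g s).
  { intros s Hs. destruct (Rle_dec s S). apply Hmx; lra. pose proof (Hbig s ltac:(lra)).
    pose proof (Hmx 0 ltac:(lra)). fold F0 in H0. unfold mm. lra. }
  set (E := fun s => 0 <= s <= S /\ Fs b g s <= mm).
  destruct (completeness E) as [s0 [Hub Hlub]].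
  { exists S. intros x [Hx _]. lra. } { exists mx. split; [lra|]. unfold mm; lra. }
  assert (Hs0 : mx <= s0 <= S). { split. apply Hub. split; [lra|unfold mm; lra]. apply Hlub. intros x [Hx _]. lra. }
  assert (HF : Fs b g s0 <= mm).
  { destruct (Rle_dec (Fs b g s0) mm) as [h|h]; [auto|]. exfalso.
    destruct (cont_pos_nbhd (Fs b g) s0 mm (Fs_cont b g s0 Hb) ltac:(lra)) as [d [Hd Hn]].
    assert (s0 <= s0 - d / 2).
    { apply Hlub. intros x [Hx1 Hx2]. destruct (Rle_dec x (s0 - d/2)); auto.
      assert (x <= s0) by (apply Hub; split; auto). assert (Rabs (x - s0) < d) by (apply Rabs_def1; lra).
      specialize (Hn x H0). lra. }
    lra. }
  exists s0. split; [lra|]. split.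
  - intros s Hs. pose proof (Hglob s Hs). lra.
  - intros s Hs. assert (Fs b g s0 = mm) by (pose proof (Hglob s0 ltac:(lra)); lra).
    destruct (Rle_dec s S).
    + destruct (Rle_dec (Fs b g s) mm). 
      * assert (s <= s0) by (apply Hub; split; [lra|auto]). lra.
      * lra.
    + pose proof (Hbig s ltac:(lra)). pose proof (Hmx 0 ltac:(lra)) as H2. fold F0 in H2. fold mm in H2. lra.
Qed.

Lemma exp_nat n y : exp (INR n * y) = exp y ^ n.
Proof. induction n. simpl. rewrite Rmult_0_l, exp_0. auto.
  rewrite S_INR. replace ((INR n + 1) * y) with (INR n * y + y) by ring. rewrite exp_plus, IHn. simpl. ring. Qed.

Lemma geom_bound z n0 m : 0 <= z < 1 -> rsum (fun i => z ^ (n0 + i)) m <= z ^ n0 / (1 - z).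
Proof. intros Hz. assert (E : rsum (fun i => z ^ (n0 + i)) m = z ^ n0 * (1 - z ^ m) / (1 - z)).
  { induction m. simpl. field. lra. simpl rsum. rewrite IHm. rewrite pow_add. simpl. field. lra. }
  rewrite E. assert (0 <= z ^ m) by (apply pow_le; lra). assert (0 <= z ^ n0) by (apply pow_le; lra).
  unfold Rdiv. apply Rmult_le_compat_r. left; apply Rinv_0_lt_compat; lra. nra. Qed.

Lemma pow_le1 c n : 0 <= c <= 1 -> c ^ n <= 1.
Proof. intros Hc. induction n; simpl. lra. assert (0 <= c ^ n) by (apply pow_le; lra). nra. Qed.

Lemma pow_mono_dec (c : R) n m : 0 <= c <= 1 -> (m <= n)%nat -> c ^ n <= c ^ m.
Proof. intros Hc Hmn. replace n with (m + (n - m))%nat by lia. rewrite pow_add.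
  assert (0 <= c ^ m) by (apply pow_le; lra). pose proof (pow_le1 c (n - m) Hc). nra. Qed.

(* enumeration of pairs (n,k), n >= n0, k < b^n *)
Definition step (b : nat) (p : nat * nat) : nat * nat :=
  let (n, k) := p in if Nat.ltb (S k) (b ^ n) then (n, S k) else (S n, O).

Fixpoint cov (b n0 : nat) (j : nat) : nat * nat :=
  match j with O => (n0, O) | S i => step b (cov b n0 i) end.

Lemma cov_inv b n0 j : (0 < b)%nat -> let (n, k) := cov b n0 j in (n0 <= n)%nat /\ (k < b ^ n)%nat.
Proof. intros Hb. induction j; simpl.
  - split; [lia|]. pose proof (Nat.pow_le_mono_r b 0 n0 ltac:(lia) ltac:(lia)). simpl in H. lia.
  - destruct (cov b n0 j) as [n k]. unfold step. destruct (Nat.ltb_spec (S k) (b ^ n)).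
    + lia.
    + split; [lia|]. pose proof (Nat.pow_le_mono_r b 0 (S n) ltac:(lia) ltac:(lia)). simpl in H0. simpl. lia.
Qed.

Lemma cov_reach0 b n0 n : (0 < b)%nat -> (n0 <= n)%nat -> exists j, cov b n0 j = (n, O).
Proof. intros Hb Hn. induction n.
  - assert (n0 = O) by lia. subst. exists O. reflexivity.
  - destruct (Nat.eq_dec n0 (S n)). subst. exists O. reflexivity.
    destruct (IHn ltac:(lia)) as [j Hj].
    assert (Hall : forall k, (k < b ^ n)%nat -> cov b n0 (j + k) = (n, k)).
    { induction k; intros Hk. rewrite Nat.add_0_r; auto.
      rewrite Nat.add_succ_r. simpl. rewrite IHk by lia. unfold step.
      destruct (Nat.ltb_spec (S k) (b ^ n)); [reflexivity | lia]. }
    assert (Hp : (0 < b ^ n)%nat) by (apply Nat.neq_0_lt_0, Nat.pow_nonzero; lia).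
    exists (S (j + (b ^ n - 1))). simpl. rewrite Hall by lia. unfold step.
    destruct (Nat.ltb_spec (S (b ^ n - 1)) (b ^ n)); [lia | reflexivity].
Qed.

Lemma cov_reach b n0 n k : (0 < b)%nat -> (n0 <= n)%nat -> (k < b ^ n)%nat -> exists j, cov b n0 j = (n, k).
Proof. intros Hb Hn Hk. destruct (cov_reach0 b n0 n Hb Hn) as [j Hj]. exists (j + k)%nat.
  induction k. rewrite Nat.add_0_r; auto.
  rewrite Nat.add_succ_r. simpl. rewrite IHk by lia. unfold step.
  destruct (Nat.ltb_spec (S k) (b ^ n)); [reflexivity | lia]. Qed.

Lemma cov_sum b n0 (h : nat -> nat -> R) j : (0 < b)%nat ->
  let (n, k) := cov b n0 j in
  rsum (fun i => h (fst (cov b n0 i)) (snd (cov b n0 i))) (S j) =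
  rsum (fun i => rsum (h (n0 + i)%nat) (b ^ (n0 + i))) (n - n0) + rsum (h n) (S k).
Proof. intros Hb. induction j.
  - simpl. rewrite Nat.sub_diag. simpl. ring.
  - pose proof (cov_inv b n0 j Hb) as Hi.
    change (rsum (fun i => h (fst (cov b n0 i)) (snd (cov b n0 i))) (S (S j))) with
      (rsum (fun i => h (fst (cov b n0 i)) (snd (cov b n0 i))) (S j) + h (fst (cov b n0 (S j))) (snd (cov b n0 (S j)))).
    change (cov b n0 (S j)) with (step b (cov b n0 j)).
    destruct (cov b n0 j) as [n k] eqn:Ep. destruct Hi as [Hn Hk].
    rewrite IHj. unfold step. destruct (Nat.ltb_spec (S k) (b ^ n)).
    + simpl. ring.
    + simpl fst; simpl snd. replace (S n - n0)%nat with (S (n - n0)) by lia. simpl rsum.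
      replace (n0 + (n - n0))%nat with n by lia. replace (b ^ n)%nat with (S k) by lia. simpl. ring.
Qed.

Lemma rsum_shift f N : rsum f (S N) = f O + rsum (fun i => f (S i)) N.
Proof. induction N. simpl. ring. simpl rsum. simpl rsum in IHN. rewrite IHN. ring. Qed.

Lemma sc_empty s (U : R -> Prop) : (forall x, ~ U x) -> set_cost s U 0.
Proof. intros H. left. split; auto. intros [x Hx]. exact (H x Hx). Qed.

Lemma sc_interval s (U : R -> Prop) a d : 0 < d -> (forall x, U x <-> a <= x <= a + d) ->
  set_cost s U (Rpower d s) /\ diam_le U d.
Proof. intros Hd HU. split.
  - right. split. exists a. apply HU; lra. exists d. split.
    + split.
      * intros r [x [y [Hx [Hy Hr]]]]. apply HU in Hx, Hy. subst r. unfold Rabs; destruct Rcase_abs; lra.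
      * intros m Hm. apply Hm. exists (a + d), a. repeat split; try apply HU; try lra.
        replace (a + d - a) with d by ring. rewrite Rabs_right; lra.
    + right. right. auto.
  - intros x y Hx Hy. apply HU in Hx, Hy. unfold Rabs; destruct Rcase_abs; lra.
Qed.

Lemma sc_single s (U : R -> Prop) p : s <> 0 -> (forall x, U x <-> x = p) -> set_cost s U 0 /\ diam_le U 0.
Proof. intros Hs HU. split.
  - right. split. exists p. apply HU; auto. exists 0. split.
    + split.
      * intros r [x [y [Hx [Hy Hr]]]]. apply HU in Hx, Hy. rewrite Hr, Hx, Hy. replace (p - p) with 0 by ring. rewrite Rabs_R0. lra.
      * intros m Hm. apply Hm. exists p, p. repeat split; try apply HU; auto. replace (p - p) with 0 by ring. rewrite Rabs_R0. auto.
    + right. left. auto.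
  - intros x y Hx Hy. apply HU in Hx, Hy. rewrite Hx, Hy. replace (p - p) with 0 by ring. rewrite Rabs_R0. lra.
Qed.

Lemma inv_pow_mul c n : 0 < c -> (/ c) ^ n * c ^ n = 1.
Proof. intros Hc. rewrite <- Rpow_mult_distr. rewrite Rinv_l by lra. apply pow1. Qed.

Lemma Rpower_invpow b t l : (1 < b)%nat -> Rpower ((/ INR b) ^ l) t = exp (- (t * ln (INR b))) ^ l.
Proof. intros Hb. assert (0 < INR b) by (apply lt_0_INR; lia). unfold Rpower.
  rewrite ln_pow by (apply Rinv_0_lt_compat; auto). rewrite ln_Rinv by auto. rewrite <- exp_nat. f_equal. ring. Qed.

Lemma terms_small b g x l : Un_cv (fun N => sum_f_R0 (fun n => gprod b g x (S n)) N) l ->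
  forall n0, exists L, (n0 <= L)%nat /\ gprod b g x L < 1.
Proof. intros H n0. destruct (H (1/2) ltac:(lra)) as [N HN].
  exists (S (S (N + n0))). split; [lia|].
  pose proof (HN (N + n0)%nat ltac:(lia)). pose proof (HN (S (N + n0)) ltac:(lia)).
  unfold R_dist in *.
  change (sum_f_R0 _ (S (N+n0))) with (sum_f_R0 (fun n => gprod b g x (S n)) (N+n0) + gprod b g x (S (S (N+n0)))) in H1.
  apply Rabs_def2 in H0. apply Rabs_def2 in H1. lra. Qed.

Lemma invb_facts b : (1 < b)%nat -> 0 < / INR b < 1.
Proof. intros Hb. assert (1 < INR b) by (apply lt_1_INR; lia). split. apply Rinv_0_lt_compat; lra.
  rewrite <- Rinv_1. apply Rinv_lt_contravar; lra. Qed.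

Lemma full_bound b g s t l : (1 < b)%nat -> (forall i, (i < b)%nat -> 0 < g i) -> 0 <= s ->
  rsum (fun k => if Rle_dec (Qw b g l k) 1 then Rpower ((/ INR b) ^ l) t else 0) (b ^ l)
  <= (Zs b g s * exp (- (t * ln (INR b)))) ^ l.
Proof.
  intros Hb Hg Hs. rewrite Rpow_mult_distr, <- (Rpower_invpow b t l Hb).
  assert (Hp : 0 < Rpower ((/ INR b) ^ l) t) by (unfold Rpower; apply exp_pos).
  unfold Zs. rewrite <- (Qw_prod b g (fun x => exp (- s * ln x))); auto.
  2:{ intros x y Hx Hy. rewrite ln_mult by auto. rewrite <- exp_plus. f_equal; ring. }
  2:{ rewrite ln_1, Rmult_0_r, exp_0. auto. }
  rewrite Rmult_comm, <- rsum_scal. apply rsum_le. intros k Hk.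
  destruct (Rle_dec (Qw b g l k) 1).
  - assert (1 <= exp (- s * ln (Qw b g l k))).
    { rewrite <- exp_0. apply exp_le'. assert (ln (Qw b g l k) <= 0).
      { rewrite <- ln_1. apply ln_le'; auto. apply Qw_pos; auto. } nra. }
    nra.
  - pose proof (exp_pos (- s * ln (Qw b g l k))). nra.
Qed.

Lemma upper_bound b g s t : (1 < b)%nat -> (forall i, (i < b)%nat -> 0 < g i) -> 0 <= s ->
  Fs b g s < t * ln (INR b) -> 0 < t -> Hnull t (Xset b g).
Proof.
  intros Hb Hg Hs Ht Ht0 delta eps Hd He.
  assert (Hb0 : (0 < b)%nat) by lia.
  pose proof (invb_facts b Hb) as Hib.
  set (z := Zs b g s * exp (- (t * ln (INR b)))).
  assert (Hz : 0 < z < 1).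
  { unfold z. pose proof (Zs_pos b g s Hb0). rewrite <- (exp_ln (Zs b g s)) by auto.
    rewrite <- exp_plus. split. apply exp_pos. rewrite <- exp_0. apply exp_increasing.
    unfold Fs in Ht. lra. }
  destruct (pow_lt_1_zero (/ INR b) ltac:(rewrite Rabs_right; lra) delta Hd) as [N1 HN1].
  destruct (pow_lt_1_zero z ltac:(rewrite Rabs_right; lra) (eps * (1 - z)) ltac:(nra)) as [N2 HN2].
  set (n0 := Nat.max N1 N2).
  set (cell := fun n k x => INR k * (/ INR b) ^ n <= x <= INR k * (/ INR b) ^ n + (/ INR b) ^ n).
  set (hc := fun n k => if Rle_dec (Qw b g n k) 1 then Rpower ((/ INR b) ^ n) t else 0).
  exists (fun j x => match j with O => x = 1 | S i => Qw b g (fst (cov b n0 i)) (snd (cov b n0 i)) <= 1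
                                       /\ cell (fst (cov b n0 i)) (snd (cov b n0 i)) x end).
  exists (fun j => match j with O => 0 | S i => hc (fst (cov b n0 i)) (snd (cov b n0 i)) end).
  split; [|split].
  -
    intros x [Hx [l Hl]]. destruct (Req_dec x 1) as [Hx1|Hx1]. exists O. auto.
    assert (Hx2 : x < 1) by lra.
    destruct (terms_small b g x l Hl n0) as [L [HL HgL]].
    set (k := Nfl b x L).
    assert (Hbl : 0 < INR b ^ L) by (apply pow_lt; apply lt_0_INR; lia).
    pose proof (Nfl_bounds b x L ltac:(lra)) as Hk. fold k in Hk.
    assert (Hkl : (k < b ^ L)%nat).
    { apply INR_lt. rewrite pow_INR. assert (x * INR b ^ L < INR b ^ L) by nra. lra. }
    destruct (cov_reach b n0 L k Hb0 HL Hkl) as [j Hj]. exists (S j). rewrite Hj. simpl fst; simpl snd.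
    split. rewrite gprod_Qw in HgL by (lra || lia). fold k in HgL. lra.
    unfold cell. pose proof (inv_pow_mul (INR b) L ltac:(apply lt_0_INR; lia)).
    assert (0 < (/ INR b) ^ L) by (apply pow_lt; lra).
    split; nra.
  - intros j. destruct j.
    + destruct (sc_single t (fun x => x = 1) 1 ltac:(lra) ltac:(tauto)) as [H1 H2]. split; auto.
      intros x y Hx Hy. specialize (H2 x y Hx Hy). lra.
    + destruct (cov b n0 j) as [n k] eqn:Ej. pose proof (cov_inv b n0 j Hb0) as Hci. rewrite Ej in Hci.
      simpl fst; simpl snd. unfold hc. destruct (Rle_dec (Qw b g n k) 1) as [hq|hq].
      * assert (0 < (/ INR b) ^ n) by (apply pow_lt; lra).
        destruct (sc_interval t (fun x => Qw b g n k <= 1 /\ cell n k x) (INR k * (/ INR b) ^ n) ((/ INR b) ^ n) H)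
          as [H1 H2]. { intros x. unfold cell. tauto. }
        split; auto. intros x y Hx Hy. specialize (H2 x y Hx Hy).
        pose proof (pow_mono_dec (/ INR b) n N1 ltac:(lra) ltac:(unfold n0 in Hci; lia)).
        specialize (HN1 N1 (le_n _)). rewrite Rabs_right in HN1 by (apply Rle_ge, pow_le; lra). lra.
      * split. intros x y Hx. exfalso; tauto. apply sc_empty. intros x Hx; tauto.
  - intros N. rewrite rsum_sum_f_R0, rsum_shift.
    assert (Hhc : forall n k, 0 <= hc n k). { intros; unfold hc. destruct Rle_dec. unfold Rpower; left; apply exp_pos. lra. }
    destruct N. simpl. lra.
    pose proof (cov_sum b n0 hc N Hb0) as Hs'. destruct (cov b n0 N) as [n k] eqn:Ej.
    pose proof (cov_inv b n0 N Hb0) as Hci. rewrite Ej in Hci.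
    change (0 + rsum (fun i => hc (fst (cov b n0 i)) (snd (cov b n0 i))) (S N) <= eps).
    rewrite Hs'.
    assert (rsum (hc n) (S k) <= rsum (hc (n0 + (n - n0))%nat) (b ^ (n0 + (n - n0)))).
    { replace (n0 + (n - n0))%nat with n by lia. apply rsum_mono; auto. lia. }
    assert (rsum (fun i => rsum (hc (n0 + i)%nat) (b ^ (n0 + i))) (n - n0) + rsum (hc (n0 + (n - n0))%nat) (b ^ (n0 + (n - n0)))
       <= rsum (fun i => z ^ (n0 + i)) (S (n - n0))).
    { simpl rsum. apply Rplus_le_compat. apply rsum_le. intros i _. apply full_bound; auto.
      apply full_bound; auto. }
    pose proof (geom_bound z n0 (S (n - n0)) ltac:(lra)).
    specialize (HN2 N2 (le_n _)). rewrite Rabs_right in HN2 by (apply Rle_ge, pow_le; lra).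
    pose proof (pow_mono_dec z n0 N2 ltac:(lra) ltac:(unfold n0; lia)).
    assert (z ^ n0 / (1 - z) < eps). { apply Rlt_le_trans with (eps * (1 - z) / (1 - z)). unfold Rdiv.
      apply Rmult_lt_compat_r. apply Rinv_0_lt_compat; lra. lra. right. field. lra. }
    lra.
Qed.

Definition lsum (f : nat -> R) (l : list nat) : R := fold_right (fun w acc => f w + acc) 0 l.

Lemma lsum_nonneg f l : (forall w, In w l -> 0 <= f w) -> 0 <= lsum f l.
Proof. induction l; simpl; intros H. lra. pose proof (H a (or_introl eq_refl)). pose proof (IHl (fun w h => H w (or_intror h))). lra. Qed.

Lemma lsum_le f h l : (forall w, In w l -> f w <= h w) -> lsum f l <= lsum h l.
Proof. induction l; simpl; intros H. lra. pose proof (H a (or_introl eq_refl)). pose proof (IHl (fun w h => H w (or_intror h))). lra. Qed.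

Lemma lsum_const c l : lsum (fun _ => c) l = INR (length l) * c.
Proof. induction l; simpl lsum; simpl length. simpl; ring. rewrite IHl, S_INR. ring. Qed.

Lemma lsum_plus f h l : lsum (fun w => f w + h w) l = lsum f l + lsum h l.
Proof. induction l; simpl. ring. rewrite IHl. ring. Qed.

Lemma lsum_scal c f l : lsum (fun w => c * f w) l = c * lsum f l.
Proof. induction l; simpl. ring. rewrite IHl. ring. Qed.

Lemma lsum_ext f h l : (forall w, In w l -> f w = h w) -> lsum f l = lsum h l.
Proof. induction l; simpl; intros H. auto. rewrite (H a (or_introl eq_refl)), (IHl (fun w h => H w (or_intror h))). auto. Qed.

Lemma lsum_rsum (f : nat -> nat -> R) l N : lsum (fun w => rsum (f w) N) l = rsum (fun n => lsum (fun w => f w n) l) N.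
Proof. induction N; simpl. induction l; simpl; auto. rewrite IHl. ring.
  rewrite <- IHN. clear IHN. induction l; simpl. ring. rewrite IHl. ring. Qed.

Lemma lsum_one f l c : NoDup l -> (forall w, In w l -> 0 <= f w <= c) ->
  (forall w1 w2, In w1 l -> In w2 l -> f w1 <> 0 -> f w2 <> 0 -> w1 = w2) -> 0 <= c -> lsum f l <= c.
Proof. induction l as [|a l IH]; intros Hnd Hb Hu Hc; simpl. lra.
  inversion Hnd; subst.
  destruct (Req_dec (f a) 0) as [Ha|Ha].
  - rewrite Ha. assert (lsum f l <= c). apply IH; auto. intros w Hw; apply Hb; simpl; auto.
    intros; apply Hu; simpl; auto. lra.
  - assert (E : lsum f l = 0).
    { assert (lsum f l <= lsum (fun _ => 0) l). apply lsum_le. intros w Hw.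
      destruct (Req_dec (f w) 0). lra. exfalso. assert (a = w) by (apply Hu; simpl; auto). subst; auto.
      rewrite lsum_const in H. pose proof (lsum_nonneg f l ltac:(intros w Hw; apply Hb; simpl; auto)). lra. }
    rewrite E. pose proof (Hb a (or_introl eq_refl)). lra.
Qed.

Fixpoint Afn (B : nat) (W : list nat) (r : nat) (z : Z) (K : nat) : R :=
  match r with
  | O => if Z.eq_dec (Z.of_nat K) z then 1 else 0
  | S r' => / INR (length W) * lsum (fun w => Afn B W r' z (K * B + w)) W
  end.

Definition ac B W (l : nat) (z : Z) (k K : nat) : R :=
  if Nat.leb l k then (if Z.eq_dec (Z.of_nat (K / B ^ (k - l))) z then 1 else 0) else Afn B W (l - k) z K.

Definition ac3 B W l z k K := ac B W l (z - 1) k K + ac B W l z k K + ac B W l (z + 1) k K.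

Definition Pw B W (lv : nat -> nat) (lz : nat -> Z) (N k K : nat) : R :=
  rsum (fun n => ac3 B W (lv n) (lz n) k K) N.

Lemma Afn_nonneg B W r z K : 0 <= Afn B W r z K.
Proof. revert K; induction r; intros K; simpl. destruct Z.eq_dec; lra.
  apply Rmult_le_pos. destruct (length W). simpl. rewrite Rinv_0. lra. left; apply Rinv_0_lt_compat, lt_0_INR; lia.
  apply lsum_nonneg; auto. Qed.

Lemma ac_nonneg B W l z k K : 0 <= ac B W l z k K.
Proof. unfold ac. destruct Nat.leb. destruct Z.eq_dec; lra. apply Afn_nonneg. Qed.

Lemma ac3_nonneg B W l z k K : 0 <= ac3 B W l z k K.
Proof. unfold ac3. pose proof (ac_nonneg B W l (z-1) k K). pose proof (ac_nonneg B W l z k K). pose proof (ac_nonneg B W l (z+1) k K). lra. Qed.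

Lemma ac_avg B W l z k K : (0 < B)%nat -> (0 < length W)%nat -> (forall w, In w W -> (w < B)%nat) ->
  ac B W l z k K = / INR (length W) * lsum (fun w => ac B W l z (S k) (K * B + w)) W.
Proof.
  intros HB HW HwB. assert (HM : 0 < INR (length W)) by (apply lt_0_INR; lia).
  unfold ac. destruct (Nat.leb_spec l k).
  - destruct (Nat.leb_spec l (S k)); [|lia].
    rewrite (lsum_ext _ (fun _ => if Z.eq_dec (Z.of_nat (K / B ^ (k - l))) z then 1 else 0)).
    + rewrite lsum_const. field. lra.
    + intros w Hw. replace (S k - l)%nat with (S (k - l)) by lia. rewrite Nat.pow_succ_r'.
      rewrite <- Nat.Div0.div_div. rewrite Nat.add_comm, Nat.div_add by lia.
      rewrite (Nat.div_small w B) by (apply HwB; auto). simpl. reflexivity.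
  - destruct (Nat.leb_spec l (S k)).
    + assert (l = S k) by lia. subst. rewrite Nat.sub_diag. replace (S k - k)%nat with 1%nat by lia.
      cbn [Afn]. f_equal. apply lsum_ext. intros w Hw. rewrite Nat.pow_0_r, Nat.div_1_r. reflexivity.
    + replace (l - k)%nat with (S (l - S k)) by lia. reflexivity.
Qed.

Lemma Pw_avg B W lv lz N k K : (0 < B)%nat -> (0 < length W)%nat -> (forall w, In w W -> (w < B)%nat) ->
  Pw B W lv lz N k K = / INR (length W) * lsum (fun w => Pw B W lv lz N (S k) (K * B + w)) W.
Proof. intros HB HW HwB. unfold Pw. rewrite (lsum_rsum (fun w n => ac3 B W (lv n) (lz n) (S k) (K * B + w))).
  rewrite <- rsum_scal. apply rsum_ext. intros n _. unfold ac3.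
  rewrite !(ac_avg B W (lv n) _ k K) by auto.
  rewrite <- !lsum_scal. rewrite <- !lsum_plus. apply lsum_ext. intros w _. ring.
Qed.

Lemma Afn_bound B W r z K : NoDup W -> (forall w, In w W -> (w < B)%nat) -> (0 < B)%nat -> (0 < length W)%nat ->
  Afn B W r z K <= (/ INR (length W)) ^ r /\ (Afn B W r z K <> 0 -> Z.of_nat K = (z / Z.of_nat (B ^ r))%Z).
Proof.
  intros Hnd HwB HB HW. assert (HM : 0 < INR (length W)) by (apply lt_0_INR; lia).
  revert K; induction r; intros K.
  - simpl. destruct Z.eq_dec; split; try lra; intros _. rewrite Z.div_1_r. auto.
  - split.
    + cbn [Afn]. simpl pow. apply Rmult_le_compat_l. left; apply Rinv_0_lt_compat; auto.
      apply lsum_one; auto.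
      * intros w _. split. apply Afn_nonneg. apply IHr.
      * intros w1 w2 H1 H2 F1 F2. apply (proj2 (IHr _)) in F1. apply (proj2 (IHr _)) in F2.
        rewrite <- F2 in F1. apply Nat2Z.inj in F1. lia.
      * apply pow_le. left; apply Rinv_0_lt_compat; auto.
    + intros Hnz. cbn [Afn] in Hnz.
      assert (Hex : exists w, In w W /\ Afn B W r z (K * B + w) <> 0).
      { destruct (Classical_Prop.classic (exists w, In w W /\ Afn B W r z (K * B + w) <> 0)); auto. exfalso. apply Hnz.
        assert (lsum (fun w => Afn B W r z (K * B + w)) W = 0).
        { assert (lsum (fun w => Afn B W r z (K * B + w)) W <= lsum (fun _ => 0) W).
          apply lsum_le. intros w Hw. destruct (Req_dec (Afn B W r z (K * B + w)) 0). lra. exfalso; eauto.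
          rewrite lsum_const, Rmult_0_r in H0. pose proof (lsum_nonneg (fun w => Afn B W r z (K * B + w)) W ltac:(intros; apply Afn_nonneg)). lra. }
        rewrite H0. ring. }
      destruct Hex as [w [Hw Hnz']]. apply (proj2 (IHr _)) in Hnz'.
      assert (HwB' := HwB w Hw). assert (Hbr : (0 < B ^ r)%nat) by (apply Nat.neq_0_lt_0, Nat.pow_nonzero; lia).
      rewrite Nat.pow_succ_r', Nat2Z.inj_mul, Z.mul_comm, <- Z.div_div by lia.
      rewrite <- Hnz'. rewrite Nat2Z.inj_add, Nat2Z.inj_mul.
      rewrite Z.div_add_l by lia. rewrite Z.div_small by lia. lia.
Qed.

Lemma ac3_root B W l z : NoDup W -> (forall w, In w W -> (w < B)%nat) -> (0 < B)%nat -> (0 < length W)%nat ->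
  ac3 B W l z 0 0 <= 3 * (/ INR (length W)) ^ l.
Proof. intros Hnd HwB HB HW.
  assert (H : forall z', ac B W l z' 0 0 <= (/ INR (length W)) ^ l).
  { intros z'. unfold ac. destruct (Nat.leb_spec l 0).
    - assert (l = O) by lia. subst. rewrite Nat.sub_diag, Nat.pow_0_r, Nat.div_1_r. destruct (Z.eq_dec (Z.of_nat 0) z'); simpl; lra.
    - rewrite Nat.sub_0_r. apply (Afn_bound B W l z' 0 Hnd HwB HB HW). }
  unfold ac3. pose proof (H (z-1)%Z). pose proof (H z). pose proof (H (z+1)%Z). lra. Qed.

Lemma lsum_lt f h l : l <> [] -> (forall w, In w l -> h w < f w) -> lsum h l < lsum f l.
Proof. induction l as [|a l IH]; intros Hl H. congruence. simpl.
  pose proof (H a (or_introl eq_refl)). destruct l as [|a' l'].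
  simpl. lra. assert (lsum h (a' :: l') < lsum f (a' :: l')). apply IH. congruence. intros; apply H; simpl; auto. lra. Qed.

Lemma Pw_mono B W lv lz N N' k K : (N <= N')%nat -> Pw B W lv lz N k K <= Pw B W lv lz N' k K.
Proof. intros H. unfold Pw. apply rsum_mono; auto. intros; apply ac3_nonneg. Qed.

Lemma common_N (Q : nat -> nat -> Prop) (l : list nat) : (forall w N N', (N <= N')%nat -> Q w N -> Q w N') ->
  (forall w, In w l -> exists N, Q w N) -> exists N, forall w, In w l -> Q w N.
Proof. intros Hm. induction l as [|a l IH]; intros H. exists O. intros w [].
  destruct (H a (or_introl eq_refl)) as [Na HNa]. destruct IH as [N HN]. intros w Hw; apply H; simpl; auto.
  exists (Nat.max Na N). intros w [Hw|Hw]. subst. apply Hm with Na; auto; lia. apply Hm with N; auto; lia. Qed.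

Lemma Pw_step B W lv lz k K sig : (0 < B)%nat -> (0 < length W)%nat -> (forall w, In w W -> (w < B)%nat) ->
  (forall N, Pw B W lv lz N k K <= sig) -> exists w, In w W /\ forall N, Pw B W lv lz N (S k) (K * B + w) <= sig.
Proof. intros HB HW HwB H. apply Classical_Prop.NNPP. intros Hn.
  assert (H1 : forall w, In w W -> exists N, sig < Pw B W lv lz N (S k) (K * B + w)).
  { intros w Hw. apply Classical_Prop.NNPP. intros H2. apply Hn. exists w. split; auto. intros N.
    apply Rnot_lt_le. intros H3. apply H2. eauto. }
  destruct (common_N (fun w N => sig < Pw B W lv lz N (S k) (K * B + w)) W) as [N HN]; auto.
  { intros w N N' HNN' HQ. eapply Rlt_le_trans. apply HQ. apply Pw_mono; auto. }
  specialize (H N). rewrite Pw_avg in H by auto.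
  assert (lsum (fun _ => sig) W < lsum (fun w => Pw B W lv lz N (S k) (K * B + w)) W).
  { apply lsum_lt. destruct W; simpl in HW; [lia|congruence]. auto. }
  rewrite lsum_const in H0. assert (HM : 0 < INR (length W)) by (apply lt_0_INR; lia).
  apply Rmult_lt_compat_l with (r := / INR (length W)) in H0. 2: apply Rinv_0_lt_compat; auto.
  replace (/ INR (length W) * (INR (length W) * sig)) with sig in H0 by (field; lra). lra.
Qed.

Fixpoint Kp (B : nat) (om : nat -> nat) (k : nat) : nat :=
  match k with O => O | S k' => (Kp B om k' * B + om k')%nat end.

Lemma mk_ub (u : nat -> R) C : (forall n, u n <= C) -> has_ub u.
Proof. intros H. exists C. intros x [i Hi]. subst. auto. Qed.

Lemma growing_le (u : nat -> R) j k : Un_growing u -> (j <= k)%nat -> u j <= u k.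
Proof. intros Hg Hjk. induction Hjk. lra. pose proof (Hg m). lra. Qed.

Lemma lim_le (u : nat -> R) l C : Un_cv u l -> (forall n, u n <= C) -> l <= C.
Proof. intros Hu H. apply (Rle_cv_lim (Un := u) (Vn := fun _ => C)); auto.
  intros eps He. exists O. intros. unfold R_dist. rewrite Rminus_diag, Rabs_R0. auto. Qed.

Lemma Nfl_div b x n r : 0 <= x -> (0 < b)%nat -> (Nfl b x (n + r) / b ^ r = Nfl b x n)%nat.
Proof. intros Hx Hb. induction r. rewrite Nat.add_0_r, Nat.pow_0_r, Nat.div_1_r. auto.
  rewrite Nat.add_succ_r, Nat.pow_succ_r', <- Nat.Div0.div_div. rewrite Nfl_S by auto. auto. Qed.

Lemma Qw_le_G b g r N : (1 < b)%nat -> (forall i, (i < b)%nat -> 0 < g i) -> Qw b g r N <= (rsum g b + 1) ^ r.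
Proof. intros Hb Hg. revert N; induction r; intros N; simpl. lra.
  assert (g (N mod b) <= rsum g b).
  { apply rsum_ge_term. intros; left; auto. apply Nat.mod_upper_bound; lia. }
  pose proof (Qw_pos b g r (N / b) Hb Hg). pose proof (Hg (N mod b) ltac:(apply Nat.mod_upper_bound; lia)).
  specialize (IHr (N / b)%nat). assert (0 <= rsum g b) by (apply rsum_nonneg; intros; left; auto).
  rewrite (Rmult_comm (rsum g b + 1)). apply Rmult_le_compat; lra. Qed.

Lemma cantor_point b g m (W : list nat) th (om : nat -> nat) :
  (1 < b)%nat -> (forall i, (i < b)%nat -> 0 < g i) -> (0 < m)%nat -> 0 < th < 1 ->
  (forall w, In w W -> (w + 2 <= b ^ m)%nat /\ Qw b g m w <= th) -> (forall k, In (om k) W) ->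
  exists x, Xset b g x /\ 0 <= x < 1 /\ forall k, Nfl b x (m * k) = Kp (b ^ m) om k.
Proof.
  intros Hb Hg Hm Hth HW Hom. set (B := (b ^ m)%nat).
  assert (HB2 : (2 <= B)%nat).
  { unfold B. destruct m. lia. rewrite Nat.pow_succ_r'. pose proof (Nat.pow_nonzero b m ltac:(lia)). nia. }
  assert (HBr : 2 <= INR B) by (replace 2 with (INR 2) by (simpl; ring); apply le_INR; auto).
  set (c := (INR B - 2) / (INR B - 1)).
  assert (Hc : 0 <= c < 1). { unfold c. split. apply Rmult_le_pos. lra. left; apply Rinv_0_lt_compat; lra.
    apply Rmult_lt_reg_r with (INR B - 1). lra. unfold Rdiv. rewrite Rmult_assoc, Rinv_l by lra. lra. }
  assert (Hom2 : forall k, INR (om k) <= INR B - 2).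
  { intros k. destruct (HW _ (Hom k)) as [H1 _]. fold B in H1. apply le_INR in H1. rewrite plus_INR in H1. simpl in H1. lra. }
  assert (Hgr : forall k i, INR (Kp B om (k + i)) + c <= (INR (Kp B om k) + c) * INR B ^ i).
  { intros k i. induction i. rewrite Nat.add_0_r. simpl. lra.
    rewrite Nat.add_succ_r. simpl Kp. rewrite plus_INR, mult_INR. simpl pow.
    assert (INR B - 2 + c <= c * INR B). { unfold c. apply Rmult_le_reg_r with (INR B - 1). lra.
      unfold Rdiv. field_simplify; try lra. }
    pose proof (Hom2 (k + i)%nat). pose proof (pos_INR (Kp B om (k + i))). nra. }
  assert (HiB : 0 < / INR B < 1). { split. apply Rinv_0_lt_compat; lra. rewrite <- Rinv_1. apply Rinv_lt_contravar; lra. }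
  set (u := fun k => INR (Kp B om k) * (/ INR B) ^ k).
  assert (Hpm : forall k, (/ INR B) ^ k * INR B ^ k = 1) by (intros; apply inv_pow_mul; lra).
  assert (Hug : Un_growing u).
  { intros k. unfold u. simpl Kp. rewrite plus_INR, mult_INR. simpl pow.
    pose proof (pos_INR (om k)). assert (0 < (/ INR B) ^ k) by (apply pow_lt; lra).
    replace ((INR (Kp B om k) * INR B + INR (om k)) * (/ INR B * (/ INR B) ^ k)) with
      (INR (Kp B om k) * (/ INR B) ^ k + INR (om k) * (/ INR B * (/ INR B) ^ k)) by (field; lra).
    assert (0 <= INR (om k) * (/ INR B * (/ INR B) ^ k)) by (apply Rmult_le_pos; [lra| apply Rmult_le_pos; lra]).
    lra. }
  assert (Hub : forall k j, u j <= (INR (Kp B om k) + c) * (/ INR B) ^ k).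
  { intros k j. destruct (le_lt_dec k j).
    - unfold u. replace j with (k + (j - k))%nat by lia. specialize (Hgr k (j - k)%nat).
      rewrite pow_add. assert (0 < (/ INR B) ^ k) by (apply pow_lt; lra).
      assert (0 < (/ INR B) ^ (j - k)) by (apply pow_lt; lra). specialize (Hpm (j - k)%nat).
      apply Rmult_le_compat_r with (r := (/ INR B) ^ (j - k)) in Hgr; [|lra].
      rewrite Rmult_assoc, (Rmult_comm (INR B ^ (j - k))), Hpm, Rmult_1_r in Hgr.
      assert (INR (Kp B om (k + (j - k))) * (/ INR B) ^ (j - k) <= INR (Kp B om k) + c) by nra.
      rewrite (Rmult_comm ((/ INR B) ^ k)), <- Rmult_assoc. apply Rmult_le_compat_r; lra.
    - apply Rle_trans with (u k). apply growing_le; auto; lia. unfold u.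
      assert (0 < (/ INR B) ^ k) by (apply pow_lt; lra). nra. }
  destruct (growing_cv u Hug (mk_ub u _ (Hub O))) as [x Hx].
  assert (Hxl : forall k, u k <= x) by (intros; apply growing_ineq; auto).
  assert (Hxu : forall k, x <= (INR (Kp B om k) + c) * (/ INR B) ^ k) by (intros k; apply (lim_le u); auto).
  assert (Hx01 : 0 <= x < 1). { split. specialize (Hxl O). unfold u in Hxl. simpl in Hxl. lra.
    specialize (Hxu O). simpl in Hxu. lra. }
  assert (HN : forall k, Nfl b x (m * k) = Kp B om k).
  { intros k. apply Nfl_unique. lra. rewrite pow_mult, <- pow_INR. fold B. specialize (Hxl k). specialize (Hxu k).
    unfold u in Hxl. specialize (Hpm k). assert (0 < INR B ^ k) by (apply pow_lt; lra).
    apply Rmult_le_compat_r with (r := INR B ^ k) in Hxl; [|lra]. apply Rmult_le_compat_r with (r := INR B ^ k) in Hxu; [|lra].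
    rewrite Rmult_assoc, Hpm, Rmult_1_r in Hxl, Hxu. split; lra. }
  exists x. split; [|split; auto].
  split. lra.
  set (G := rsum g b + 1).
  assert (HG : 1 <= G). { unfold G. pose proof (rsum_nonneg g b ltac:(intros; left; auto)). lra. }
  assert (HQK : forall q, Qw b g (m * q) (Kp B om q) <= th ^ q).
  { induction q. rewrite Nat.mul_0_r. simpl. lra.
    replace (m * S q)%nat with (m + m * q)%nat by lia. rewrite Qw_split by auto. fold B.
    simpl Kp. assert (Hw := HW _ (Hom q)). fold B in Hw.
    rewrite Nat.div_add_l by lia. rewrite Nat.div_small by lia. rewrite Nat.add_0_r.
    rewrite Nat.add_comm, Nat.Div0.mod_add. rewrite Nat.mod_small by lia.
    pose proof (Qw_pos b g m (om q) Hb Hg). pose proof (Qw_pos b g (m * q) (Kp B om q) Hb Hg).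
    simpl pow. destruct Hw. pose proof (pow_lt th q ltac:(lra)). nra. }
  set (al := exp (ln th / INR m)).
  assert (Hm' : 0 < INR m) by (apply lt_0_INR; auto).
  assert (Hlth : ln th < 0). { rewrite <- ln_1. apply ln_increasing; lra. }
  assert (Hal : 0 < al < 1). { unfold al. split. apply exp_pos. rewrite <- exp_0. apply exp_increasing.
    unfold Rdiv. assert (0 < / INR m) by (apply Rinv_0_lt_compat; auto). nra. }
  assert (Hterm : forall n, gprod b g x n <= G ^ m / th * al ^ n).
  { intros n. rewrite gprod_Qw by (lra || lia).
    pose proof (Nat.div_mod n m ltac:(lia)) as Hdm. set (q := (n / m)%nat) in *. set (r := (n mod m)%nat) in *.
    assert (Hr : (r < m)%nat) by (apply Nat.mod_upper_bound; lia).
    assert (E1: n = (r + m*q)%nat) by lia. assert (E2: n = (m*q + r)%nat) by lia.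
    replace (Qw b g n (Nfl b x n)) with (Qw b g (r + m*q) (Nfl b x (m*q + r))) by (rewrite <- E1, <- E2; reflexivity).
    rewrite Qw_split by auto. rewrite Nfl_div by (lra || lia). rewrite HN.
    pose proof (HQK q). pose proof (Qw_le_G b g r (Nfl b x (m * q + r) mod b ^ r) Hb Hg). fold G in H0.
    pose proof (Rle_pow G r m HG ltac:(lia)).
    assert (th ^ q <= al ^ n / th).
    { unfold al. rewrite <- exp_nat. rewrite <- (exp_ln th) at 1 by lra. rewrite <- exp_nat.
      apply Rmult_le_reg_r with th. lra. unfold Rdiv. rewrite Rmult_assoc, Rinv_l, Rmult_1_r by lra.
      rewrite <- (exp_ln th) at 2 by lra. rewrite <- exp_plus. apply exp_le'.
      assert (INR n < INR m * (INR q + 1)).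
      { rewrite Hdm. rewrite plus_INR, mult_INR. apply lt_INR in Hr. lra. }
      apply Rmult_le_reg_r with (INR m). auto. field_simplify; [|lra]. nra. }
    pose proof (Qw_pos b g (m * q) (Kp B om q) Hb Hg). pose proof (Qw_pos b g r (Nfl b x (m * q + r) mod b ^ r) Hb Hg).
    assert (0 <= G ^ m) by (apply pow_le; lra).
    replace (G ^ m / th * al ^ n) with ((al ^ n / th) * G ^ m) by (field; lra).
    apply Rmult_le_compat; try lra. }
  assert (Hpos : forall n, 0 <= gprod b g x n) by (intros; rewrite gprod_Qw by (lra||lia); left; apply Qw_pos; auto).
  assert (Hsb : forall N, sum_f_R0 (fun n => gprod b g x (S n)) N <= G ^ m / th * (al ^ 1 / (1 - al))).
  { intros N. rewrite rsum_sum_f_R0. apply Rle_trans with (rsum (fun i => G ^ m / th * al ^ (1 + i)) (S N)).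
    apply rsum_le. intros k _. apply Hterm. rewrite rsum_scal. apply Rmult_le_compat_l.
    assert (0 <= G ^ m) by (apply pow_le; lra). unfold Rdiv. apply Rmult_le_pos; auto. left; apply Rinv_0_lt_compat; lra.
    apply geom_bound; lra. }
  destruct (growing_cv (fun N => sum_f_R0 (fun n => gprod b g x (S n)) N)) as [l Hl].
  { intros N. change (sum_f_R0 (fun n => gprod b g x (S n)) (S N)) with (sum_f_R0 (fun n => gprod b g x (S n)) N + gprod b g x (S (S N))).
    pose proof (Hpos (S (S N))). lra. }
  { apply (mk_ub _ _ Hsb). }
  exists l. exact Hl.
Qed.

Lemma find_level d q : 0 < d < 1 -> 0 < q < 1 -> exists l, q ^ (S l) <= d < q ^ l.
Proof. intros Hd Hq. destruct (pow_lt_1_zero q ltac:(rewrite Rabs_right; lra) d ltac:(lra)) as [N HN].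
  specialize (HN N (le_n _)). rewrite Rabs_right in HN by (apply Rle_ge, pow_le; lra).
  apply Rlt_le in HN. clear -HN Hd Hq. induction N. simpl in HN. lra.
  destruct (Rlt_dec d (q ^ N)). exists N. split; [exact HN | exact r]. apply IHN. lra. Qed.

Lemma Int_part_close r1 r2 : Rabs (r1 - r2) < 1 -> (Z.abs (Int_part r1 - Int_part r2) <= 1)%Z.
Proof. intros H. apply Rabs_def2 in H. destruct (base_Int_part r1) as [A1 A2]. destruct (base_Int_part r2) as [B1 B2].
  assert (IZR (Int_part r1 - Int_part r2) < 2) by (rewrite minus_IZR; lra).
  assert (-2 < IZR (Int_part r1 - Int_part r2)) by (rewrite minus_IZR; lra).
  apply lt_IZR in H0. apply lt_IZR in H1. lia. Qed.

Lemma Rpower_le_base x y t : 0 < x -> x <= y -> 0 <= t -> Rpower x t <= Rpower y t.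
Proof. intros Hx Hxy Ht. unfold Rpower. apply exp_le'. apply Rmult_le_compat_l; auto. apply ln_le'; auto. Qed.

Lemma Z_of_Nfl b y n : 0 <= y -> Z.of_nat (Nfl b y n) = Int_part (y * INR b ^ n).
Proof. intros Hy. unfold Nfl. rewrite Z2Nat.id. auto. apply Int_part_nonneg. apply Rmult_le_pos; auto. apply pow_le, pos_INR. Qed.

Lemma label_exists b m (M : R) t (U : R -> Prop) cn (n L0 : nat) :
  (1 < b)%nat -> (0 < m)%nat -> 2 <= M -> 0 <= t -> Rpower (INR (b ^ m)) t <= M ->
  diam_le U (1/2) -> set_cost t U cn ->
  exists p : nat * Z, (/ M) ^ (fst p) <= Rpower (INR (b ^ m)) t * cn + (/ M) ^ L0 * (/ 2) ^ n /\
    forall y, U y -> 0 <= y -> y < 1 -> (Z.abs (Z.of_nat (Nfl b y (m * fst p)) - snd p) <= 1)%Z.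
Proof.
  intros Hb Hm HM Ht Hbeta Hdiam Hsc.
  set (B := (b ^ m)%nat) in *.
  assert (HB2 : (2 <= B)%nat).
  { unfold B. destruct m. lia. rewrite Nat.pow_succ_r'. pose proof (Nat.pow_nonzero b m ltac:(lia)). nia. }
  assert (HBr : 2 <= INR B) by (replace 2 with (INR 2) by (simpl; ring); apply le_INR; auto).
  set (beta := Rpower (INR B) t) in *.
  assert (Hbeta1 : 1 <= beta). { unfold beta, Rpower. rewrite <- exp_0. apply exp_le'.
    apply Rmult_le_pos; auto. rewrite <- ln_1. apply ln_le'; lra. }
  assert (HiM : 0 < / M <= / 2). { split. apply Rinv_0_lt_compat; lra. apply Rinv_le_contravar; lra. }
  assert (Hextra : 0 <= (/ M) ^ L0 * (/ 2) ^ n) by (apply Rmult_le_pos; apply pow_le; lra).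
  assert (Hsmall : (/ M) ^ (L0 + n) <= (/ M) ^ L0 * (/ 2) ^ n).
  { rewrite pow_add. apply Rmult_le_compat_l. apply pow_le; lra. apply pow_incr; lra. }
  assert (Hgen : forall a d l, U a -> 0 <= d -> (forall y, U y -> Rabs (y - a) <= d) -> d * INR B ^ l < 1 ->
     forall y, U y -> 0 <= y -> y < 1 -> (Z.abs (Z.of_nat (Nfl b y (m * l)) - Int_part (a * INR b ^ (m * l))) <= 1)%Z).
  { intros a d l Ha Hd Hya Hl y Hy Hy0 Hy1. rewrite Z_of_Nfl by auto. apply Int_part_close.
    rewrite pow_mult, <- pow_INR. fold B. assert (0 < INR B ^ l) by (apply pow_lt; lra).
    replace (y * INR B ^ l - a * INR B ^ l) with ((y - a) * INR B ^ l) by ring.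
    rewrite Rabs_mult, (Rabs_right (INR B ^ l)) by lra. specialize (Hya y Hy). nra. }
  destruct Hsc as [[Hne Hc] | [[a Ha] [d [Hlub Hcases]]]].
  - exists ((L0 + n)%nat, 0%Z). simpl fst. split. subst cn. rewrite Rmult_0_r. lra.
    intros y Hy. exfalso. apply Hne. eauto.
  - assert (Hya : forall y, U y -> Rabs (y - a) <= d).
    { intros y Hy. apply (proj1 Hlub). exists y, a. auto. }
    assert (Hd12 : d <= 1/2). { apply (proj2 Hlub). intros r [x [y [Hx [Hy Hr]]]]. subst. apply Hdiam; auto. }
    assert (Hd0 : 0 <= d). { rewrite <- (Rabs_R0). replace 0 with (a - a) by ring. apply Hya; auto. }
    destruct Hcases as [[Hd [Ht0 Hc]] | [[Hd [Ht0 Hc]] | [Hd Hc]]].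
    + exists (0%nat, Int_part (a * INR b ^ (m * 0))). simpl fst. split.
      * subst cn. unfold beta. subst t. unfold Rpower. rewrite Rmult_0_l, exp_0. simpl. lra.
      * apply (Hgen a d 0%nat); auto. subst d. simpl. lra.
    + exists ((L0 + n)%nat, Int_part (a * INR b ^ (m * (L0 + n)))). simpl fst. split.
      * subst cn. rewrite Rmult_0_r. lra.
      * apply (Hgen a d (L0 + n)%nat); auto. subst d. lra.
    + assert (HiB : 0 < / INR B < 1). { split. apply Rinv_0_lt_compat; lra. rewrite <- Rinv_1. apply Rinv_lt_contravar; lra. }
      destruct (find_level d (/ INR B) ltac:(lra) HiB) as [l [Hl1 Hl2]].
      exists (l, Int_part (a * INR b ^ (m * l))). simpl fst. split.
      * set (e := exp (- (t * ln (INR B)))).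
        assert (Hbe : beta * e = 1). { unfold beta, e, Rpower. rewrite <- exp_plus. rewrite <- exp_0. f_equal. ring. }
        assert (He : 0 < e) by apply exp_pos.
        assert (HMe : / M <= e). { replace e with (/ beta) by (field_simplify_eq; [lra| lra]). apply Rinv_le_contravar; lra. }
        assert (Hc' : e ^ (S l) <= cn).
        { subst cn. unfold e. rewrite <- (Rpower_invpow B t (S l)) by lia. apply Rpower_le_base; auto. apply pow_lt; lra. }
        assert ((/ M) ^ l <= e ^ l) by (apply pow_incr; lra).
        assert (beta * e ^ (S l) = e ^ l) by (simpl; rewrite <- Rmult_assoc, Hbe; ring).
        assert (beta * e ^ (S l) <= beta * cn) by (apply Rmult_le_compat_l; lra). lra.
      * apply (Hgen a d l); auto. pose proof (inv_pow_mul (INR B) l ltac:(lra)).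
        assert (0 < INR B ^ l) by (apply pow_lt; lra). nra.
Qed.

Lemma cantor_lower b g m (W : list nat) th t :
  (1 < b)%nat -> (forall i, (i < b)%nat -> 0 < g i) -> (0 < m)%nat -> 0 < th < 1 -> NoDup W ->
  (forall w, In w W -> (w + 2 <= b ^ m)%nat /\ Qw b g m w <= th) -> (2 <= length W)%nat -> 0 <= t ->
  Rpower (INR (b ^ m)) t <= INR (length W) -> ~ Hnull t (Xset b g).
Proof.
  intros Hb Hg Hm Hth Hnd HW HlW Ht Hbeta Hnull.
  set (B := (b ^ m)%nat) in *. set (M := INR (length W)) in *.
  assert (HM : 2 <= M) by (unfold M; replace 2 with (INR 2) by (simpl; ring); apply le_INR; auto).
  assert (HB0 : (0 < B)%nat) by (unfold B; apply Nat.neq_0_lt_0, Nat.pow_nonzero; lia).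
  assert (HW0 : (0 < length W)%nat) by lia.
  assert (HwB : forall w, In w W -> (w < B)%nat) by (intros w Hw; specialize (HW w Hw); unfold B; lia).
  set (beta := Rpower (INR B) t) in *.
  assert (Hbeta0 : 0 < beta) by (unfold beta, Rpower; apply exp_pos).
  assert (HiM : 0 < / M < 1). { split. apply Rinv_0_lt_compat; lra. rewrite <- Rinv_1. apply Rinv_lt_contravar; lra. }
  destruct (pow_lt_1_zero (/ M) ltac:(rewrite Rabs_right; lra) (1/24) ltac:(lra)) as [L0 HL0].
  specialize (HL0 L0 (le_n _)). rewrite Rabs_right in HL0 by (apply Rle_ge, pow_le; lra).
  destruct (Hnull (1/2) (/ (12 * beta)) ltac:(lra) ltac:(apply Rinv_0_lt_compat; lra)) as [U [c [Hcov [Hsc Hsum]]]].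
  set (Q := fun n (p : nat * Z) => (/ M) ^ (fst p) <= beta * c n + (/ M) ^ L0 * (/ 2) ^ n /\
    forall y, U n y -> 0 <= y -> y < 1 -> (Z.abs (Z.of_nat (Nfl b y (m * fst p)) - snd p) <= 1)%Z).
  assert (HQ : forall n, exists p, Q n p).
  { intros n. destruct (Hsc n) as [Hd Hc]. apply (label_exists b m M t (U n) (c n) n L0); auto. }
  set (pp := fun n => epsilon (inhabits (0%nat, 0%Z)) (Q n)).
  assert (Hpp : forall n, Q n (pp n)) by (intros n; apply epsilon_spec, HQ).
  set (lv := fun n => fst (pp n)). set (lz := fun n => snd (pp n)).
  assert (Hroot : forall N, Pw B W lv lz N 0 0 <= 1/2).
  { intros N. unfold Pw. apply Rle_trans with (rsum (fun n => 3 * (beta * c n + (/ M) ^ L0 * (/ 2) ^ n)) N).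
    - apply rsum_le. intros n _. eapply Rle_trans. apply ac3_root; auto. fold M.
      destruct (Hpp n) as [H1 _]. unfold lv. lra.
    - rewrite rsum_scal, rsum_plus, rsum_scal, rsum_scal.
      assert (rsum c N <= / (12 * beta)).
      { destruct N. simpl. left; apply Rinv_0_lt_compat; lra. rewrite <- rsum_sum_f_R0. apply Hsum. }
      assert (rsum (fun n => (/ 2) ^ n) N <= 2).
      { pose proof (geom_bound (/ 2) 0 N ltac:(lra)). simpl in H0. replace (1 / (1 - / 2)) with 2 in H0 by field. auto. }
      assert (beta * / (12 * beta) = 1/12) by (field; lra).
      assert (0 <= (/ M) ^ L0) by (apply pow_le; lra).
      assert (beta * rsum c N <= 1/12). { rewrite <- H1. apply Rmult_le_compat_l; lra. }
      assert ((/ M) ^ L0 * rsum (fun n => (/ 2) ^ n) N <= 1/12). { apply Rle_trans with (1/24 * 2). apply Rmult_le_compat; try lra. apply rsum_nonneg; intros; apply pow_le; lra. lra. }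
      change (rsum (pow (/ 2)) N) with (rsum (fun n => (/ 2) ^ n) N). lra. }
  set (nxt := fun k K => epsilon (inhabits 0%nat) (fun w => In w W /\ forall N, Pw B W lv lz N (S k) (K * B + w) <= 1/2)).
  set (Kpath := fix Kpath k := match k with O => O | S k' => (Kpath k' * B + nxt k' (Kpath k'))%nat end).
  assert (Hinv : forall k, (forall N, Pw B W lv lz N k (Kpath k) <= 1/2) /\ In (nxt k (Kpath k)) W).
  { intros k. induction k.
    - split. apply Hroot. unfold nxt. apply (epsilon_spec (inhabits 0%nat) (fun w => In w W /\ forall N, Pw B W lv lz N 1 (0 * B + w) <= 1/2)).
      apply Pw_step; auto.
    - destruct IHk as [IH1 IH2].
      assert (Hs : forall N, Pw B W lv lz N (S k) (Kpath (S k)) <= 1/2).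
      { change (Kpath (S k)) with (Kpath k * B + nxt k (Kpath k))%nat.
        exact (proj2 (epsilon_spec (inhabits 0%nat) (fun w => In w W /\ forall N, Pw B W lv lz N (S k) (Kpath k * B + w) <= 1/2)
          (Pw_step B W lv lz k (Kpath k) (1/2) HB0 HW0 HwB IH1))). }
      split; auto. unfold nxt. apply (epsilon_spec (inhabits 0%nat) (fun w => In w W /\ forall N, Pw B W lv lz N (S (S k)) (Kpath (S k) * B + w) <= 1/2)).
      apply Pw_step; auto. }
  set (om := fun k => nxt k (Kpath k)).
  assert (HKp : forall k, Kp B om k = Kpath k). { induction k. auto. simpl. rewrite IHk. reflexivity. }
  destruct (cantor_point b g m W th om Hb Hg Hm Hth HW (fun k => proj2 (Hinv k))) as [x [HxX [Hx01 HxN]]].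
  destruct (Hcov x HxX) as [n Hn].
  destruct (Hpp n) as [_ Hlab]. specialize (Hlab x Hn (proj1 Hx01) (proj2 Hx01)).
  fold B in HxN. rewrite HxN, HKp in Hlab. fold (lv n) in Hlab. fold (lz n) in Hlab.
  set (l := lv n) in *. set (K := Kpath l) in *.
  assert (H1 : 1 <= ac3 B W l (lz n) l K).
  { unfold ac3, ac. rewrite Nat.leb_refl, Nat.sub_diag, Nat.pow_0_r, Nat.div_1_r.
    destruct (Z.eq_dec (Z.of_nat K) (lz n - 1)); destruct (Z.eq_dec (Z.of_nat K) (lz n));
    destruct (Z.eq_dec (Z.of_nat K) (lz n + 1)); try lra. lia. }
  destruct (Hinv l) as [Hi _]. specialize (Hi (S n)). unfold Pw in Hi.
  pose proof (rsum_ge_term (fun n0 => ac3 B W (lv n0) (lz n0) l K) (S n) n ltac:(intros; apply ac3_nonneg) ltac:(lia)).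
  fold K in Hi. cbv beta in H. fold l in H. lra.
Qed.

Lemma deriv_zero_min (F : R -> R) c l : 0 < c -> derivable_pt_lim F c l -> (forall s, 0 <= s -> F c <= F s) -> l = 0.
Proof. intros Hc Hd Hmin.
  assert (pr : derivable_pt F c) by (exists l; exact Hd).
  pose proof (deriv_minimum F 0 (c + 1) c pr Hc ltac:(lra) ltac:(intros x Hx _; apply Hmin; lra)).
  rewrite <- H. symmetry. apply derive_pt_eq_0. exact Hd. Qed.

Lemma params (F : R -> R) s0 l mu : 0 <= s0 -> 0 < mu -> derivable_pt_lim F s0 l -> s0 * l = 0 ->
  (forall s, 0 <= s -> F s0 <= F s) -> (forall s, s0 < s -> F s0 < F s) ->
  exists s s2 lr lth, s0 < s < s2 /\ lth < 0 /\ F s0 - (s - s0) * lth < F s /\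
    F s2 + (s2 - s) * lr < F s /\ F s0 - mu < F s + s * lr.
Proof.
  intros Hs0 Hmu Hd Hl Hmin Hstr.
  set (e := mu / (8 * (s0 + 1))).
  assert (He : 0 < e) by (unfold e; apply Rdiv_lt_0_compat; lra).
  destruct (Hd e He) as [[dl Hdl] Hdd]. simpl in Hdd.
  set (h := Rmin (dl / 2) (Rmin 1 (mu / (8 * (Rabs l + 1))))).
  assert (Hal : 0 < Rabs l + 1) by (pose proof (Rabs_pos l); lra).
  assert (Hh0 : 0 < h). { unfold h. repeat apply Rmin_glb_lt; try lra. apply Rdiv_lt_0_compat; lra. }
  assert (Hh1 : h <= 1) by (unfold h; eapply Rle_trans; [apply Rmin_r | apply Rmin_l]).
  assert (Hh2 : h <= mu / (8 * (Rabs l + 1))) by (unfold h; eapply Rle_trans; [apply Rmin_r | apply Rmin_r]).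
  assert (Hh3 : h <= dl / 2) by (unfold h; apply Rmin_l).
  specialize (Hdd h ltac:(lra) ltac:(rewrite Rabs_right; lra)).
  set (D := F (s0 + h) - F s0) in *.
  apply Rabs_def2 in Hdd. destruct Hdd as [Hq1 Hq2].
  assert (HD0 : 0 <= D) by (unfold D; pose proof (Hmin (s0 + h) ltac:(lra)); lra).
  assert (HDh : D < h * (l + e)). { apply Rmult_lt_compat_l with (r := h) in Hq1; [|lra].
    replace (h * (D / h - l)) with (D - h * l) in Hq1 by (field; lra). lra. }
  assert (HDh' : 2 * s0 * D <= 2 * s0 * h * e + 0).
  { replace (2 * s0 * h * e) with (2 * s0 * (h * (l + e)) - 2 * (s0 * l) * h) by ring. rewrite Hl.
    assert (0 <= s0) by auto. nra. }
  set (E := (2 * s0 / h + 1) * D).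
  assert (HE : E < mu / 2).
  { unfold E. replace ((2 * s0 / h + 1) * D) with (2 * s0 * D / h + D) by (field; lra).
    assert (2 * s0 * D / h <= 2 * s0 * e). { apply Rmult_le_reg_r with h; auto. unfold Rdiv. rewrite Rmult_assoc, Rinv_l, Rmult_1_r by lra. nra. }
    assert (h * l <= h * Rabs l) by (apply Rmult_le_compat_l; [lra|apply Rle_abs]).
    assert (h * Rabs l <= mu / 8). { apply Rle_trans with (mu / (8 * (Rabs l + 1)) * Rabs l). apply Rmult_le_compat_r; auto. apply Rabs_pos.
      apply Rmult_le_reg_r with (8 * (Rabs l + 1)). lra. field_simplify; [|lra]. pose proof (Rabs_pos l). nra. }
    assert (h * e <= e) by nra.
    assert ((2 * s0 + 1) * e = mu / 8 * ((2 * s0 + 1) / (s0 + 1))) by (unfold e; field; lra).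
    assert ((2 * s0 + 1) / (s0 + 1) <= 2). { apply Rmult_le_reg_r with (s0 + 1). lra. field_simplify; lra. }
    nra. }
  set (s := s0 + h / 2). set (s2 := s0 + h).
  assert (HFs : F s0 < F s) by (apply Hstr; unfold s; lra).
  set (sig := (F s2 - F s) / (s2 - s)).
  assert (Hsig : sig <= 2 * D / h).
  { assert (E1 : sig = 2 * (F s2 - F s) * / h) by (unfold sig, s, s2; field; lra). rewrite E1.
    unfold Rdiv. apply Rmult_le_compat_r. left; apply Rinv_0_lt_compat; lra. unfold D, s2. lra. }
  assert (Hss : s * sig <= E).
  { unfold E. replace ((2 * s0 / h + 1) * D) with (s * (2 * D / h)) by (unfold s; field; lra).
    apply Rmult_le_compat_l; auto. unfold s; lra. }
  set (ka := mu / (4 * (s + 1))).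
  assert (Hka : 0 < ka) by (unfold ka; apply Rdiv_lt_0_compat; unfold s; lra).
  assert (Hska : s * ka < mu / 4). { unfold ka. apply Rmult_lt_reg_r with (4 * (s + 1)). unfold s; lra.
    field_simplify; unfold s; nra. }
  exists s, s2, (- sig - ka), (- (F s - F s0) / h).
  split. unfold s, s2; lra. split.
  { unfold Rdiv. assert (0 < / h) by (apply Rinv_0_lt_compat; lra). nra. }
  split.
  { replace (F s0 - (s - s0) * (- (F s - F s0) / h)) with (F s0 + (F s - F s0) / 2) by (unfold s; field; lra). lra. }
  split.
  { replace (F s2 + (s2 - s) * (- sig - ka)) with (F s - (s2 - s) * ka) by (unfold sig; field; unfold s, s2; lra).
    assert (0 < (s2 - s) * ka) by (apply Rmult_lt_0_compat; unfold s, s2; lra). lra. }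
  { replace (F s + s * (- sig - ka)) with (F s - s * sig - s * ka) by ring. lra. }
Qed.

Lemma filter_count (p : nat -> bool) n : INR (length (filter p (seq 0 n))) = rsum (fun k => if p k then 1 else 0) n.
Proof. induction n. simpl. auto. rewrite seq_S, filter_app, length_app, plus_INR, IHn. simpl.
  destruct (p n); simpl; ring. Qed.

Lemma exists_large (P : nat -> Prop) C : (forall m, C <= INR m -> P m) -> exists m, (0 < m)%nat /\ P m.
Proof. intros H. destruct (INR_unbounded (Rabs C + 1)) as [n Hn]. exists (S n). split. lia.
  apply H. rewrite S_INR. pose proof (Rle_abs C). pose proof (pos_INR n). lra. Qed.

Lemma lower_bound b g s0 t : (1 < b)%nat -> (forall i, (i < b)%nat -> 0 < g i) -> 0 <= s0 ->
  (forall s, 0 <= s -> Fs b g s0 <= Fs b g s) -> (forall s, s0 < s -> Fs b g s0 < Fs b g s) ->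
  0 <= t -> t * ln (INR b) < Fs b g s0 -> ~ Hnull t (Xset b g).
Proof.
  intros Hb Hg Hs0 Hmin Hstr Ht Hlt.
  assert (Hb0 : (0 < b)%nat) by lia.
  set (F := Fs b g) in *. set (lb := ln (INR b)) in *.
  assert (Hlb : 0 < lb). { unfold lb. rewrite <- ln_1. apply ln_increasing. lra. apply lt_1_INR; lia. }
  destruct (Fs_deriv b g s0 Hb0) as [l Hl].
  assert (Hsl : s0 * l = 0).
  { destruct (Req_dec s0 0). subst; ring. rewrite (deriv_zero_min F s0 l); auto. ring. lra. }
  destruct (params F s0 l (F s0 - t * lb) Hs0 ltac:(lra) Hl Hsl Hmin Hstr) as [s [s2 [lr [lth [Hss [Hlth [Hi [Hii Hiii]]]]]]]].
  set (a1 := F s0 - (s - s0) * lth - F s). set (a2 := F s2 + (s2 - s) * lr - F s).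
  set (a0 := F s + s * lr - t * lb).
  assert (Ha1 : a1 < 0) by (unfold a1; lra). assert (Ha2 : a2 < 0) by (unfold a2; lra).
  assert (Ha0 : 0 < a0) by (unfold a0; lra).
  destruct (exists_large (fun m => INR m * a1 <= - ln 4 /\ INR m * a2 <= - ln 4 /\ ln 6 <= INR m * a0)
     (Rmax (ln 4 / - a1) (Rmax (ln 4 / - a2) (ln 6 / a0)))) as [m [Hm [Hm1 [Hm2 Hm3]]]].
  { intros m Hm. assert (H1 := Rmax_l (ln 4 / - a1) (Rmax (ln 4 / - a2) (ln 6 / a0))).
    assert (H2 := Rmax_l (ln 4 / - a2) (ln 6 / a0)). assert (H3 := Rmax_r (ln 4 / - a2) (ln 6 / a0)).
    assert (H4 := Rmax_r (ln 4 / - a1) (Rmax (ln 4 / - a2) (ln 6 / a0))).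
    split; [|split].
    - assert (ln 4 / - a1 <= INR m) by lra. apply Rmult_le_compat_r with (r := - a1) in H; [|lra].
      unfold Rdiv in H. rewrite Rmult_assoc, Rinv_l, Rmult_1_r in H by lra. lra.
    - assert (ln 4 / - a2 <= INR m) by lra. apply Rmult_le_compat_r with (r := - a2) in H; [|lra].
      unfold Rdiv in H. rewrite Rmult_assoc, Rinv_l, Rmult_1_r in H by lra. lra.
    - assert (ln 6 / a0 <= INR m) by lra. apply Rmult_le_compat_r with (r := a0) in H; [|lra].
      unfold Rdiv in H. rewrite Rmult_assoc, Rinv_l, Rmult_1_r in H by lra. lra. }
  set (M := INR m). change (INR m) with M in Hm1, Hm2, Hm3. assert (HM : 0 < M) by (unfold M; apply lt_0_INR; auto).
  set (B := (b ^ m)%nat).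
  assert (HB0 : (0 < B)%nat) by (unfold B; apply Nat.neq_0_lt_0, Nat.pow_nonzero; lia).
  set (Q := fun k => Qw b g m k).
  assert (HQ : forall k, 0 < Q k) by (intros; apply Qw_pos; auto).
  set (goodb := fun k => if Rle_dec (M * lr) (ln (Q k)) then (if Rle_dec (ln (Q k)) (M * lth) then true else false) else false).
  set (N := rsum (fun k => if goodb k then 1 else 0) B).
  assert (HZ : forall u, Zs b g u ^ m = exp (M * F u)).
  { intros u. unfold M, F, Fs. rewrite exp_nat, exp_ln. auto. apply Zs_pos; auto. }
  assert (Hprod : forall u, rsum (fun k => exp (- u * ln (Q k))) B = exp (M * F u)).
  { intros u. rewrite <- HZ. unfold Zs, Q, B. apply (Qw_prod b g (fun x => exp (- u * ln x))); auto.
    intros x y Hx Hy. rewrite ln_mult by auto. rewrite <- exp_plus. f_equal; ring.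
    rewrite ln_1, Rmult_0_r, exp_0. auto. }
  assert (Hterm : forall k, exp (- s * ln (Q k)) <=
     exp (- (M * s * lr)) * (if goodb k then 1 else 0) + exp (- s0 * ln (Q k)) * exp (- (M * (s - s0) * lth))
     + exp (- s2 * ln (Q k)) * exp (M * (s2 - s) * lr)).
  { intros k. pose proof (exp_pos (- s0 * ln (Q k)) ). pose proof (exp_pos (- (M * (s - s0) * lth))).
    pose proof (exp_pos (- s2 * ln (Q k))). pose proof (exp_pos (M * (s2 - s) * lr)). pose proof (exp_pos (- (M * s * lr))).
    unfold goodb. destruct (Rle_dec (M * lr) (ln (Q k))) as [h1|h1]; [destruct (Rle_dec (ln (Q k)) (M * lth)) as [h2|h2]|].
    - assert (exp (- s * ln (Q k)) <= exp (- (M * s * lr))). { apply exp_le'. nra. }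
      assert (0 <= exp (- s0 * ln (Q k)) * exp (- (M * (s - s0) * lth))) by (apply Rmult_le_pos; lra).
      assert (0 <= exp (- s2 * ln (Q k)) * exp (M * (s2 - s) * lr)) by (apply Rmult_le_pos; lra). lra.
    - assert (exp (- s * ln (Q k)) <= exp (- s0 * ln (Q k)) * exp (- (M * (s - s0) * lth))).
      { rewrite <- exp_plus. apply exp_le'. nra. }
      assert (0 <= exp (- s2 * ln (Q k)) * exp (M * (s2 - s) * lr)) by (apply Rmult_le_pos; lra). lra.
    - assert (exp (- s * ln (Q k)) <= exp (- s2 * ln (Q k)) * exp (M * (s2 - s) * lr)).
      { rewrite <- exp_plus. apply exp_le'. nra. }
      assert (0 <= exp (- s0 * ln (Q k)) * exp (- (M * (s - s0) * lth))) by (apply Rmult_le_pos; lra). lra. }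
  assert (Hmain : exp (M * F s) <= exp (- (M * s * lr)) * N + exp (- (M * (s - s0) * lth)) * exp (M * F s0)
      + exp (M * (s2 - s) * lr) * exp (M * F s2)).
  { rewrite <- !Hprod. unfold N. rewrite <- !rsum_scal. rewrite <- !rsum_plus. apply rsum_le. intros k _.
    rewrite (Rmult_comm (exp (- (M * (s - s0) * lth)))), (Rmult_comm (exp (M * (s2 - s) * lr))). apply Hterm. }
  assert (Hn : exp (M * (t * lb)) * 3 <= N).
  { assert (E1 : exp (- (M * (s - s0) * lth)) * exp (M * F s0) = exp (M * F s) * exp (M * a1)).
    { rewrite <- !exp_plus. f_equal. unfold a1. ring. }
    assert (E2 : exp (M * (s2 - s) * lr) * exp (M * F s2) = exp (M * F s) * exp (M * a2)).
    { rewrite <- !exp_plus. f_equal. unfold a2. ring. }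
    set (Y := exp (M * (t * lb))). set (Z0 := exp (M * a0)). set (X := exp (M * F s)).
    assert (HY : 0 < Y) by apply exp_pos. assert (HZ0 : 0 < Z0) by apply exp_pos. assert (HX : 0 < X) by apply exp_pos.
    assert (E3 : exp (- (M * s * lr)) * (Y * Z0) = X).
    { unfold Y, Z0, X. rewrite <- !exp_plus. f_equal. unfold a0. ring. }
    rewrite E1, E2 in Hmain. fold X in Hmain.
    assert (exp (M * a1) <= / 4). { rewrite <- (exp_ln (/ 4)) by lra. apply exp_le'. rewrite ln_Rinv by lra. lra. }
    assert (exp (M * a2) <= / 4). { rewrite <- (exp_ln (/ 4)) by lra. apply exp_le'. rewrite ln_Rinv by lra. lra. }
    assert (6 <= Z0). { unfold Z0. rewrite <- (exp_ln 6) by lra. apply exp_le'. lra. }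
    assert (HN0 : 0 <= N) by (apply rsum_nonneg; intros; destruct goodb; lra).
    assert (X * exp (M * a1) <= X * / 4) by (apply Rmult_le_compat_l; lra).
    assert (X * exp (M * a2) <= X * / 4) by (apply Rmult_le_compat_l; lra).
    assert (X / 2 <= exp (- (M * s * lr)) * N) by lra.
    assert (X / 2 * (Y * Z0) <= X * N). { rewrite <- E3. replace (exp (- (M * s * lr)) * (Y * Z0) * N) with (exp (- (M * s * lr)) * N * (Y * Z0)) by ring.
      apply Rmult_le_compat_r; nra. }
    assert (Y * Z0 / 2 <= N). { apply Rmult_le_reg_l with X; auto. lra. }
    nra. }
  set (p := fun k => (goodb k && negb (Nat.eqb k (B - 1)))%bool).
  set (W := filter p (seq 0 B)).
  assert (HY1 : 1 <= exp (M * (t * lb))). { rewrite <- exp_0. apply exp_le'. apply Rmult_le_pos; [lra|]. nra. }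
  assert (HlenW : N - 1 <= INR (length W)).
  { unfold W. rewrite filter_count.
    assert (Hz : forall n, rsum (fun _ => 0) n = 0) by (induction n; simpl; [auto| rewrite IHn; ring]).
    assert (H1 : rsum (fun k => if Nat.eqb k (B - 1) then 1 else 0) B <= 1).
    { assert (Hg1 : forall n, rsum (fun k => if Nat.eqb k n then 1 else 0) (S n) <= 1).
      { intros n. cbn [rsum]. rewrite Nat.eqb_refl.
        assert (rsum (fun k => if Nat.eqb k n then 1 else 0) n <= rsum (fun _ => 0) n).
        { apply rsum_le. intros k Hk. destruct (Nat.eqb_spec k n); [lia|lra]. }
        rewrite Hz in H. lra. }
      pose proof (Hg1 (B - 1)%nat). replace (S (B - 1)) with B in H by lia. exact H. }
    assert (N <= rsum (fun k => if p k then 1 else 0) B + rsum (fun k => if Nat.eqb k (B - 1) then 1 else 0) B).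
    { unfold N. rewrite <- rsum_plus. apply rsum_le. intros k _. unfold p.
      destruct (goodb k); destruct (Nat.eqb k (B - 1)); simpl; lra. }
    lra. }
  set (th := exp (M * lth)).
  assert (Hth : 0 < th < 1). { unfold th. split. apply exp_pos. rewrite <- exp_0. apply exp_increasing. nra. }
  assert (Hbeta : Rpower (INR (b ^ m)) t = exp (M * (t * lb))).
  { unfold Rpower. rewrite pow_INR, ln_pow by (apply lt_0_INR; lia). f_equal. fold M lb. ring. }
  apply (cantor_lower b g m W th t Hb Hg Hm Hth).
  - apply NoDup_filter, seq_NoDup.
  - intros w Hw. unfold W in Hw. apply filter_In in Hw. destruct Hw as [Hw1 Hw2]. apply in_seq in Hw1.
    unfold p in Hw2. apply andb_prop in Hw2. destruct Hw2 as [Hg1 Hg2]. apply Bool.negb_true_iff, Nat.eqb_neq in Hg2.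
    split. fold B. lia.
    unfold goodb in Hg1. destruct (Rle_dec (M * lr) (ln (Q w))); [|discriminate].
    destruct (Rle_dec (ln (Q w)) (M * lth)); [|discriminate].
    fold (Q w). rewrite <- (exp_ln (Q w)) by auto. unfold th. apply exp_le'. auto.
  - assert (2 <= INR (length W)) by lra. replace 2 with (INR 2) in H by (simpl; ring). apply INR_le in H. auto.
  - auto.
  - rewrite Hbeta. lra.
Qed.

Theorem theorem4p5 (b : nat) (g : nat -> R)
  (hb : (2 <= b)%nat)
  (hpos : forall i, (i < b)%nat -> 0 < g i)
  (hgt : exists i, (i < b)%nat /\ 1 < g i)
  (hlt : exists i, (i < b)%nat /\ g i < 1) :
  exists s0, 0 <= s0 /\ (forall s, 0 <= s -> dimfun b g s0 <= dimfun b g s) /\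
    hausdorff_dim (Xset b g) (dimfun b g s0).
Proof.
  assert (Hb : (1 < b)%nat) by lia. assert (Hb0 : (0 < b)%nat) by lia.
  destruct hlt as [j [Hj Hgj]].
  destruct (exists_min b g Hb0 (ex_intro _ j (conj Hj (conj (hpos j Hj) Hgj)))) as [s0 [Hs0 [Hmin Hstr]]].
  set (lb := ln (INR b)).
  assert (Hlb : 0 < lb). { unfold lb. rewrite <- ln_1. apply ln_increasing. lra. apply lt_1_INR; lia. }
  assert (Hdim : forall s, dimfun b g s = Fs b g s / lb).
  { intros s. unfold dimfun, Fs, Zs. f_equal. f_equal. rewrite rsum_sum_f_R0.
    replace (S (b - 1)) with b by lia. apply rsum_ext. intros k _. reflexivity. }
  assert (HF0 : 0 <= Fs b g s0).
  { pose proof (Fs_ge_term b g s0 j Hj). assert (ln (g j) < 0). { rewrite <- ln_1. apply ln_increasing; auto. }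
    nra. }
  exists s0. split; auto. split.
  - intros s Hs. rewrite !Hdim. unfold Rdiv. apply Rmult_le_compat_r. left; apply Rinv_0_lt_compat; auto. auto.
  - rewrite Hdim. split.
    + intros s [Hs Hn]. destruct (Rle_dec (Fs b g s0 / lb) s); auto. exfalso.
      apply (lower_bound b g s0 s Hb hpos Hs0 Hmin Hstr Hs); auto.
      apply Rmult_lt_reg_r with (/ lb). apply Rinv_0_lt_compat; auto.
      rewrite Rmult_assoc, Rinv_r, Rmult_1_r by lra. lra.
    + intros m' Hm'. destruct (Rle_dec m' (Fs b g s0 / lb)); auto. exfalso.
      set (t := (Fs b g s0 / lb + m') / 2).
      assert (HD0 : 0 <= Fs b g s0 / lb) by (unfold Rdiv; apply Rmult_le_pos; [auto| left; apply Rinv_0_lt_compat; auto]).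
      assert (Ht : m' <= t).
      { apply Hm'. split. unfold t; lra. apply (upper_bound b g s0 t Hb hpos Hs0).
        - assert (Fs b g s0 / lb < t) by (unfold t; lra).
          apply Rmult_lt_compat_r with (r := lb) in H; auto. unfold Rdiv in H.
          rewrite Rmult_assoc, Rinv_l, Rmult_1_r in H by lra. fold lb. lra.
        - unfold t; lra. }
      unfold t in Ht. lra.
Qed.
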